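(* Let $X$ be a separable Fréchet space and $T:X\to X$ a recurrent continuous linear operator. Then the following are equivalent: (1) $T$ is quasi-rigid; (2) for every $m\in\mathbb{N}$, the operator $T_m$ on $X^m$ is recurrent.
   Context: For a continuous linear operator $T$ on a Fréchet space $X$: a vector $x$ is recurrent if there is a strictly increasing sequence $(\omega_n)$ of positive integers with $T^{\omega_n}x\to x$; $\mathrm{Rec}(T)$ is the set of recurrent vectors, and $T$ is recurrent if $\mathrm{Rec}(T)$ is dense in $X$. $\mathfrak{C}$ denotes the set of strictly increasing sequences $\omega=(\omega_n)$ of positive integers for which there exists $x\neq 0$ with $T^{\omega_n}x\to x$. For $\omega\in\mathfrak{C}$, $\mathfrak{L}(\omega)=\{x\in X:\lim_n T^{\omega_n}x=x\}$. $T$ is quasi-rigid if there is $\omega\in\mathfrak{C}$ with $\mathfrak{L}(\omega)$ dense in $X$. For $m\in\mathbb{N}$, $T_m=T\oplus\cdots\oplus T$ ($m$ copies) acting coordinatewise on $X^m$. *)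

(* Defs.v *)
From HB Require Import structures.
From mathcomp Require Import all_boot all_order all_algebra.
From mathcomp Require Import all_classical all_reals all_analysis.

Set Implicit Arguments.
Unset Strict Implicit.
Unset Printing Implicit Defensive.

Import Order.TTheory GRing.Theory Num.Theory.

Local Open Scope classical_set_scope.
Local Open Scope ring_scope.

(* A topological vector space X (tvsType: a locally convex tvs over the real
   field R) is a Fréchet space if it is Hausdorff, metrizable (0 has a countable
   neighbourhood base) and complete (every Cauchy sequence for the
   translation-invariant uniformity converges).  Local convexity is part of
   tvsType. *)
Definition frechet (R : realType) (X : tvsType R) : Prop :=
  [/\ hausdorff_space X,
      (exists B : nat -> set X, (forall n, nbhs (0 : X) (B n)) /\
         (forall U, nbhs (0 : X) U -> exists n, B n `<=` U)) &
      (forall u : nat -> X,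
         (forall U, nbhs (0 : X) U ->
            exists N, forall m n, (N <= m)%N -> (N <= n)%N -> U (u m - u n)) ->
         exists l : X, u @ \oo --> l)].

Definition separable_space (X : topologicalType) : Prop :=
  exists D : set X, countable D /\ dense D.

Definition incr_pos_seq (w : nat -> nat) : Prop :=
  (forall n, (0 < w n)%N) /\ (forall n, (w n < w n.+1)%N).

Definition recurrent_vec (Y : topologicalType) (f : Y -> Y) (x : Y) : Prop :=
  exists w : nat -> nat, incr_pos_seq w /\
    (fun n => iter (w n) f x) @ \oo --> x.

Definition Rec (Y : topologicalType) (f : Y -> Y) : set Y :=
  [set x | recurrent_vec f x].

Definition recurrent (Y : topologicalType) (f : Y -> Y) : Prop :=
  dense (Rec f).

Definition frakC (R : realType) (X : tvsType R) (T : X -> X) (w : nat -> nat) : Prop :=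
  incr_pos_seq w /\
  exists x : X, x <> 0 /\ (fun n => iter (w n) T x) @ \oo --> x.

Definition frakL (R : realType) (X : tvsType R) (T : X -> X) (w : nat -> nat) : set X :=
  [set x | (fun n => iter (w n) T x) @ \oo --> x].

Definition quasi_rigid (R : realType) (X : tvsType R) (T : X -> X) : Prop :=
  exists w, frakC T w /\ dense (frakL T w).

(* T_m = T (+) ... (+) T (m copies) acting coordinatewise on X^m, where X^m is
   'I_m -> X with the product topology. *)
Definition Xpow (X : topologicalType) (m : nat) := {ptws 'I_m -> X}.

Definition Tsum (X : topologicalType) (T : X -> X) (m : nat) : Xpow X m -> Xpow X m :=
  fun v i => T (v i).
Arguments Tsum {X} T m.

(* Main.v *)
Require Import Defs.
From HB Require Import structures.
From mathcomp Require Import all_boot all_order all_algebra.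
From mathcomp Require Import all_classical all_reals all_analysis.
Set Implicit Arguments.
Unset Strict Implicit.
Unset Printing Implicit Defensive.
Import Order.TTheory GRing.Theory Num.Theory.
Local Open Scope classical_set_scope.
Local Open Scope ring_scope.

Lemma nbhs_half (R : realType) (X : tvsType R) (U : set X) : nbhs 0 U ->
  exists W : set X, [/\ nbhs 0 W, (forall a b, W a -> W b -> U (a + b)),
     (forall a, W a -> W (- a)) & W `<=` U].
Proof.
move=> U0.
have := @add_continuous X (0, 0). rewrite /continuous_at /= addr0 => /(_ _ U0).
case=> /= [[A B] /= [nA nB] AB].
set W0 := A `&` B.
have nW0 : nbhs 0 W0 by apply: filterI.
exists (W0 `&` (-%R @` W0)); split.
- by apply: filterI => //; apply: nbhs0N.
- move=> a b [[Aa _] _] [[_ Bb] _]; exact: (AB (a, b)).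
- move=> a [Wa [c Wc ca]]; split; last by exists a; rewrite ?opprK.
  by rewrite -ca opprK.
- move=> a [[Aa Ba] _]; have := AB (a, 0) (conj Aa (nbhs_singleton nB)).
  by rewrite /= addr0.
Qed.
Lemma nbhs_transl0 (R : realType) (X : tvsType R) (x : X) (O : set X) :
  nbhs x O -> nbhs 0 [set u | O (x + u)].
Proof.
move=> Ox; have := @nbhsB R X O x (- x) Ox; rewrite addNr.
by apply: filterS => u [z Oz <-] /=; rewrite addrA subrr add0r.
Qed.

Lemma nbhs_sub (R : realType) (X : tvsType R) (x : X) (U : set X) :
  nbhs 0 U -> nbhs x [set y | U (y - x)].
Proof.
move=> U0; have := @nbhsT R X U x U0.
by apply: filterS => y [u Uu <-] /=; rewrite addrC addKr.
Qed.

Lemma cvg_tvsP (R : realType) (X : tvsType R) (u : nat -> X) (l : X) :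
  u @ \oo --> l <-> forall U, nbhs 0 U -> \forall n \near \oo, U (u n - l).
Proof.
split.
- move=> ul U U0; exact: (ul _ (nbhs_sub l U0)).
- move=> H O Ol; have := H _ (nbhs_transl0 Ol).
  by apply: filterS => n /=; rewrite addrC subrK.
Qed.

Lemma dense_nbhs (T : topologicalType) (S : set T) (p : T) (O : set T) :
  dense S -> nbhs p O -> exists x, O x /\ S x.
Proof.
move=> dS pO.
have O0 : (interior O) !=set0 by exists p; exact: nbhs_singleton (nbhs_interior pO).
have [x [Ox Sx]] := dS _ O0 (@open_interior _ O).
by exists x; split => //; exact: interior_subset.
Qed.
Lemma ptws_nbhs (X : topologicalType) m (p : Xpow X m) (A : 'I_m -> set X) :
  (forall i, nbhs (p i) (A i)) -> nbhs p [set f : Xpow X m | forall i, A i (f i)].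
Proof.
move=> HA.
have := @filter_forall _ _ (fun i => [set f : Xpow X m | A i (f i)]) (nbhs p) _.
apply => i.
exact: (@proj_continuous 'I_m (fun _ => X) i p (A i) (HA i)).
Qed.

Lemma dfwith_self (X : topologicalType) m (q : Xpow X m) i : dfwith q i (q i) = q.
Proof.
apply: functional_extensionality_dep => j; case: (dfwithP q (q i) j) => //.
Qed.

Lemma dense_prod (X : topologicalType) m (L : set X) :
  dense L -> dense [set f : Xpow X m | forall i, L (f i)].
Proof.
move=> dL O [p Op] oO.
suff H : forall k, exists q, O q /\ forall i : 'I_m, (i < k)%N -> L (q i).
  have [q [Oq Lq]] := H m; exists q; split => // i; exact: Lq.
elim => [|k [q [Oq Lq]]]; first by exists p.
case: (ltnP k m) => km.
- pose i0 := Ordinal km.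
  have nq : nbhs q O by apply: open_nbhs_nbhs.
  have : nbhs (q i0) (dfwith q i0 @^-1` O).
    apply: (@dfwith_continuous 'I_m (fun _ => X) q i0 (q i0)).
    by rewrite dfwith_self.
  case/(dense_nbhs dL) => x [Ox Lx].
  exists (dfwith q i0 x); split => // i; rewrite ltnS leq_eqVlt => /orP[/eqP ik|ik].
  + have -> : i = i0 by apply: val_inj.
    by rewrite dfwithin.
  + rewrite dfwithout; first exact: Lq.
    apply/negP => /eqP e; move: ik; by rewrite -e /= ltnn.
- exists q; split => // i ik; apply: Lq; exact: leq_trans (ltn_ord i) km.
Qed.
Lemma prod_cvg_coord (X : topologicalType) m (F : set_system (Xpow X m)) (f : Xpow X m) :
  Filter F -> (forall i, (fun g : Xpow X m => g i) @ F --> f i) -> F --> f.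
Proof.
move=> FF Hc U [] P [] [] Q QfinP <- [] V JV Vpz.
move=> sub; apply: (filterS sub).
apply: (@filterS _ _ _ (isBaseTopological.b V)); first by move=> g Vg; exists V.
have [L Lsub /[dup] VL <-] := QfinP _ JV.
apply: filter_bigI => /= M /[dup] LM /Lsub /set_mem [] w _ [N oN NM].
rewrite -NM; apply: (Hc w); apply: open_nbhs_nbhs; split => //.
move: Vpz; rewrite -VL => /(_ _ LM); by rewrite -NM.
Qed.

Lemma iter_Tsum (X : topologicalType) (T : X -> X) m n (v : Xpow X m) :
  iter n (Tsum T m) v = (fun i => iter n T (v i)).
Proof. by elim: n => //= n ->. Qed.

Lemma dir12 (R : realType) (X : tvsType R) (T : {linear X -> X}) :
  quasi_rigid T -> forall m : nat, recurrent (Tsum T m).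
Proof.
move=> [w [[wi _] dL]] m.
have dP := @dense_prod X m _ dL.
move=> O O0 oO; have [f [Of Lf]] := dP O O0 oO.
exists f; split => //; exists w; split => //.
apply: prod_cvg_coord => i.
have -> : (fun n => iter (w n) (Tsum T m) f) = (fun n i => iter (w n) T (f i)).
  by apply: funext => n; rewrite iter_Tsum.
exact: (Lf i).
Qed.

Definition goodV (R : realType) (X : tvsType R) (V : nat -> set X) :=
  [/\ forall n, nbhs 0 (V n), forall n a b, V n.+1 a -> V n.+1 b -> V n (a + b)
    & forall n a, V n a -> V n (- a)].

Definition half (R : realType) (X : tvsType R) (U : set X) : set X :=
  match pselect (nbhs 0 U) with
  | left h => projT1 (cid (nbhs_half h))
  | right _ => U
  end.

Lemma half_spec (R : realType) (X : tvsType R) (U : set X) : nbhs 0 U ->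
  [/\ nbhs 0 (half U), (forall a b, half U a -> half U b -> U (a + b)),
     (forall a, half U a -> half U (- a)) & half U `<=` U].
Proof.
move=> U0; rewrite /half; case: pselect => // h.
exact: (projT2 (cid (nbhs_half h))).
Qed.

Fixpoint mkV (R : realType) (X : tvsType R) (B : nat -> set X) (n : nat) : set X :=
  match n with
  | 0 => half (B 0)
  | n.+1 => half (mkV B n `&` B n.+1)
  end.

Lemma mkV_good (R : realType) (X : tvsType R) (B : nat -> set X) :
  (forall n, nbhs 0 (B n)) ->
  goodV (mkV B) /\ (forall n, mkV B n `<=` B n).
Proof.
move=> B0.
have H : forall n, nbhs 0 (mkV B n) /\ mkV B n `<=` B n.
  elim => [|n [IH1 IH2]] /=.
    by have [? _ _ ?] := half_spec (B0 0).
  have nI : nbhs 0 (mkV B n `&` B n.+1) by apply: filterI.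
  have [h1 _ _ h4] := half_spec nI.
  by split => // a /h4 [].
split; last by move=> n; case: (H n).
split.
- by move=> n; case: (H n).
- move=> n a b /= Ha Hb.
  have nI : nbhs 0 (mkV B n `&` B n.+1) by apply: filterI; [case: (H n)|].
  have [_ h2 _ _] := half_spec nI.
  by case: (h2 _ _ Ha Hb).
- case => [|n] a /=.
    by have [_ _ h3 _] := half_spec (B0 0); apply: h3.
  have nI : nbhs 0 (mkV B n `&` B n.+1) by apply: filterI; [case: (H n)|].
  by have [_ _ h3 _] := half_spec nI; apply: h3.
Qed.


Lemma V0 (R : realType) (X : tvsType R) (V : nat -> set X) : goodV V -> forall n, V n 0.
Proof. by case=> h _ _ n; exact: nbhs_singleton (h n). Qed.

Lemma Vmono (R : realType) (X : tvsType R) (V : nat -> set X) : goodV V ->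
  forall n k, (n <= k)%N -> V k `<=` V n.
Proof.
move=> gV n k /subnK <-; elim: (k - n)%N => [|r IH] a //=.
rewrite addSn => Ha; apply: IH; rewrite -[a]addr0.
have [_ h2 _] := gV; apply: h2 => //; exact: (V0 gV).
Qed.

Lemma Vtele (R : realType) (X : tvsType R) (V : nat -> set X) : goodV V ->
  forall (a : nat -> X) k N, (forall i, (N <= i)%N -> V i.+1 (a i.+1 - a i)) ->
  V N (a (N + k)%N - a N).
Proof.
move=> gV a; elim => [|k IH] N H.
  by rewrite addn0 subrr; exact: (V0 gV).
have -> : a (N + k.+1)%N - a N = (a N.+1 - a N) + (a (N.+1 + k)%N - a N.+1).
  by rewrite addSnnS [RHS]addrC addrA subrK.
case: gV => _ h2 _; apply: h2; first exact: H.
by apply: IH => i Hi; apply: H; exact: ltnW.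
Qed.

Lemma Vlim (R : realType) (X : tvsType R) (V : nat -> set X) : goodV V ->
  forall (u : nat -> X) l c j M0, u @ \oo --> l ->
  (forall M, (M0 <= M)%N -> V j.+1 (u M - c)) -> V j (l - c).
Proof.
move=> gV u l c j M0 ul H.
have [h1 h2 h3] := gV.
have := (cvg_tvsP u l).1 ul _ (h1 j.+1); case=> N _ HN.
have := HN (maxn N M0) (leq_maxl _ _) => /h3; rewrite opprB => H1.
have H2 := H (maxn N M0) (leq_maxr _ _).
have -> : l - c = (l - u (maxn N M0)) + (u (maxn N M0) - c) by rewrite addrA subrK.
exact: h2.
Qed.

Lemma iterB (R : realType) (X : tvsType R) (T : {linear X -> X}) s (a b : X) :
  iter s T (a - b) = iter s T a - iter s T b.
Proof. by elim: s => //= s ->; rewrite linearB. Qed.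

Lemma iter0 (R : realType) (X : tvsType R) (T : {linear X -> X}) s :
  iter s T (0 : X) = 0.
Proof. by elim: s => //= s ->; rewrite linear0. Qed.

Lemma iter_cont (X : topologicalType) (T : X -> X) s :
  continuous T -> continuous (iter s T).
Proof.
move=> cT; elim: s => [|s IH] x /=; first exact: cvg_id.
exact: (continuous_comp (IH x) (cT _)).
Qed.

Lemma W_nbhs (R : realType) (X : tvsType R) (T : {linear X -> X}) (U : set X) b :
  continuous T -> nbhs 0 U ->
  nbhs (0 : X) [set a | forall s, (s <= b)%N -> U (iter s T a)].
Proof.
move=> cT U0; elim: b => [|b IH].
  by apply: filterS U0 => a Ua s; rewrite leqn0 => /eqP ->.
have Hb : nbhs (0 : X) (iter b.+1 T @^-1` U).
  have h := @iter_cont X T b.+1 cT 0; rewrite /continuous_at iter0 in h; exact: h _ U0.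
apply: filterS (filterI IH Hb) => a [H1 H2] s; rewrite leq_eqVlt => /orP[/eqP ->|].
  exact: H2.
by rewrite ltnS; exact: H1.
Qed.

Lemma logn_surj i j : exists N, (j <= N)%N /\ logn 2 N = i.
Proof.
exists (2 ^ i * (2 * j).+1)%N; split.
  have h1 : (j <= (2 * j).+1)%N by rewrite ltnW // ltnS leq_pmull.
  apply: (leq_trans h1); exact: leq_pmull (expn_gt0 2 i).
rewrite lognM ?expn_gt0 // pfactorK // logn_coprime ?addn0 //.
by rewrite coprime_sym coprimen2 /= oddM.
Qed.

Lemma enum_dense (X : topologicalType) (D : set X) (x0 : X) : countable D ->
  exists e : nat -> X, D `<=` range e.
Proof.
move/countable_injP => [f finj].
exists (fun n => xget x0 [set x | D x /\ f x = n]) => d Dd.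
exists (f d) => //.
case: xgetP => [y -> [Dy fy]|/(_ d) H]; last by exfalso; apply: H.
by apply: finj; rewrite ?inE.
Qed.

Lemma step (R : realType) (X : tvsType R) (T : {linear X -> X}) (V : nat -> set X) :
  continuous T -> goodV V -> (forall m, recurrent (Tsum T m)) ->
  forall N (ys : nat -> X) (b : nat) (d : X),
  exists pr : (nat -> X) * nat,
   [/\ forall k s, (k < N)%N -> (s <= b)%N ->
         V N.+1 (iter s T (pr.1 k) - iter s T (ys k)),
       V N.+1 (pr.1 N - d), (b < pr.2)%N &
       forall k, (k <= N)%N -> V N.+1 (iter pr.2 T (pr.1 k) - pr.1 k)].
Proof.
move=> cT gV Hrec N ys b d.
have [h1 h2 h3] := gV.
set W := [set a | forall s, (s <= b)%N -> V N.+1 (iter s T a)].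
have W0 : nbhs 0 W := W_nbhs b cT (h1 N.+1).
pose p : Xpow X N.+1 := fun i => if (i < N)%N then ys i else d.
have np : nbhs p [set f : Xpow X N.+1 | forall i, W (f i - p i)].
  by apply: (@ptws_nbhs X N.+1 p (fun i x => W (x - p i))) => i; exact: nbhs_sub.
have [f [Wf [sig [[sig0 sigI] sigc]]]] := dense_nbhs (Hrec N.+1) np.
have nf : nbhs f [set g : Xpow X N.+1 | forall i, V N.+1 (g i - f i)].
  by apply: (@ptws_nbhs X N.+1 f (fun i x => V N.+1 (x - f i))) => i; exact: nbhs_sub.
have [M _ HM] := sigc _ nf.
have sigge : forall n, (n <= sig n)%N.
  by elim => // n IH; exact: leq_ltn_trans IH (sigI n).
pose n := maxn M b.+1.
have Hn := HM n (leq_maxl _ _).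
exists (fun k => f (inord k), sig n); split => /=.
- move=> k s kN sb; have := Wf (inord k) s sb.
  by rewrite iterB /p inordK ?kN // ltnS ltnW.
- have := Wf (inord N) 0 (leq0n _).
  by rewrite /= /p inordK // ltnn.
- exact: leq_trans (leq_maxr M b.+1) (sigge n).
- move=> k kN; have := Hn (inord k).
  by rewrite iter_Tsum.
Qed.

Lemma dir21 (R : realType) (X : tvsType R) (T : {linear X -> X}) :
  frechet X -> separable_space X -> (exists x : X, x <> 0) ->
  continuous T -> (forall m, recurrent (Tsum T m)) -> quasi_rigid T.
Proof.
move=> [hX [B [B0 Bbase]] cplt] [D [cD dD]] [x0 x00] cT Hrec.
have [gV VB] := mkV_good B0; set V := mkV B in gV VB.
have [h1 h2 h3] := gV.
have Vbase : forall U, nbhs 0 U -> exists j, V j `<=` U.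
  by move=> U /Bbase [j Bj]; exists j; exact: subset_trans (VB j) Bj.
have [e De] := enum_dense x0 cD.
pose stp N (s : (nat -> X) * nat) : (nat -> X) * nat :=
  projT1 (cid (step cT gV Hrec N s.1 s.2 (e (logn 2 N)))).
have stpP := fun N s => projT2 (cid (step cT gV Hrec N s.1 s.2 (e (logn 2 N)))).
pose st := fix st N := match N with 0 => ((fun _ => 0) : nat -> X, 0%N)
                                  | N'.+1 => stp N' (st N') end.
pose w N := (st N.+1).2.
pose y N k := (st N).1 k.
have Fa : forall N k s, (k < N)%N -> (s <= (st N).2)%N ->
    V N.+1 (iter s T (y N.+1 k) - iter s T (y N k)).
  by move=> N k s; have [A _ _ _] := stpP N (st N); exact: A.
have Fb : forall N, V N.+1 (y N.+1 N - e (logn 2 N)).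
  by move=> N; have [_ A _ _] := stpP N (st N); exact: A.
have Fc : forall N, ((st N).2 < w N)%N.
  by move=> N; have [_ _ A _] := stpP N (st N); exact: A.
have Fd : forall N k, (k <= N)%N -> V N.+1 (iter (w N) T (y N.+1 k) - y N.+1 k).
  by move=> N; have [_ _ _ A] := stpP N (st N); exact: A.
have wI : forall k, (w k < w k.+1)%N := fun k => Fc k.+1.
have wle : forall n N, (n <= N)%N -> (w n <= w N)%N.
  move=> n N /subnK <-; elim: (N - n)%N => //= r IH.
  by rewrite addSn; exact: leq_trans IH (ltnW (wI _)).
have w_st : forall n N, (n < N)%N -> (w n <= (st N).2)%N.
  by move=> n [|N'] //; rewrite ltnS => nN; exact: wle.
have tele : forall k s N0, (k < N0)%N ->
    (forall N, (N0 <= N)%N -> (s <= (st N).2)%N) ->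
    forall r N, (N0 <= N)%N -> V N (iter s T (y (N + r)%N k) - iter s T (y N k)).
  move=> k s N0 kN0 Hs r N NN0.
  have := @Vtele R X V gV (fun M => iter s T (y M k)) r N.
  apply => i Ni; apply: Fa.
    exact: leq_trans kN0 (leq_trans NN0 Ni).
  by apply: Hs; exact: leq_trans NN0 Ni.
have tele0 : forall k r N, (k < N)%N -> V N (y (N + r)%N k - y N k).
  by move=> k r N kN; have := tele k 0%N N kN (fun _ _ => leq0n _) r N (leqnn _).
have cauchy : forall k : nat, exists l : X, (fun M => y M k) @ \oo --> l.
  move=> k; apply: (cplt (fun M => y M k)) => U /Vbase [j Vj].
  exists (maxn j k.+1) => m n hm hn.
  have hj : forall a, (maxn j k.+1 <= a)%N -> (j <= a)%N /\ (k < a)%N.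
    by move=> a ha; split; [exact: leq_trans (leq_maxl _ _) ha
                           |exact: leq_trans (leq_maxr _ _) ha].
  case: (leqP n m) => nm.
    have [jn kn] := hj n hn.
    have := tele0 k (m - n)%N n kn; rewrite subnKC // => H.
    by apply: Vj; exact: (Vmono gV jn H).
  have [jm km] := hj m hm.
  have := tele0 k (n - m)%N m km; rewrite subnKC ?(ltnW nm) // => /h3.
  by rewrite opprB => H; apply: Vj; exact: (Vmono gV jm H).
pose z k := projT1 (cid (cauchy k)).
have zP : forall k : nat, (fun M => y M k) @ \oo --> z k := fun k => projT2 (cid (cauchy k)).
have zT : forall s k : nat, (fun M => iter s T (y M k)) @ \oo --> iter s T (z k).
  move=> s k; apply: (cvg_trans _ (@iter_cont X T s cT (z k))).
  exact: (cvg_app (iter s T) (zP k)).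
have t3 : forall k n, (k <= n)%N -> V n (z k - y n.+1 k).
  move=> k n kn; apply: (@Vlim R X V gV _ _ _ n n.+1 (zP k)) => M hM.
  by have := tele0 k (M - n.+1)%N n.+1 kn; rewrite subnKC.
have t1 : forall k n, (k <= n)%N ->
    V n (iter (w n) T (z k) - iter (w n) T (y n.+1 k)).
  move=> k n kn; apply: (@Vlim R X V gV _ _ _ n n.+1 (zT (w n) k)) => M hM.
  have := tele k (w n) n.+1 kn (fun N hN => w_st n N hN) (M - n.+1)%N n.+1 (leqnn _).
  by rewrite subnKC.
have key : forall j k, (k <= j.+2)%N -> V j (iter (w j.+2) T (z k) - z k).
  move=> j k kj.
  have e1 := t1 k j.+2 kj.
  have e2 := Vmono gV (leqnSn j.+2) (Fd j.+2 k kj).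
  have e3 := Vmono gV (leqnSn j.+1) (h3 _ _ (t3 k j.+2 kj)).
  have -> : iter (w j.+2) T (z k) - z k =
     ((iter (w j.+2) T (z k) - iter (w j.+2) T (y j.+3 k)) +
      (iter (w j.+2) T (y j.+3 k) - y j.+3 k)) + (- (z k - y j.+3 k)).
    by rewrite opprB !addrA !subrK.
  exact: (h2 j _ _ (h2 j.+1 _ _ e1 e2) e3).
have Lz : forall k, frakL T w (z k).
  move=> k; apply/cvg_tvsP => U /Vbase [j Vj].
  exists (j + k).+2 => // -[|[|m]] //= hn.
  rewrite !ltnS in hn.
  apply: Vj; apply: (Vmono gV (leq_trans (leq_addr k j) hn)).
  apply: key; apply: (leq_trans (leq_addl j k)); exact: leq_trans hn (leqW (leqnSn _)).
have zd : forall (x : X) (O : set X), nbhs x O -> exists N, O (z N).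
  move=> x O xO; have [j Vj] := Vbase _ (nbhs_transl0 xO).
  have [d [Vd Dd]] := dense_nbhs dD (nbhs_sub x (h1 j.+1)).
  have [i _ ei] := De d Dd.
  have [[|N'] [jN lN]] := logn_surj i j.+2; first by [].
  exists N'.+1.
  have f1 := t3 N'.+1 N'.+1 (leqnn _).
  have f2 := Vmono gV (leqnSn _) (Fb N'.+1); rewrite lN ei in f2.
  have f3 : V j.+1 (z N'.+1 - d).
    apply: (Vmono gV (_ : (j.+1 <= N')%N)); first by rewrite -ltnS.
    have -> : z N'.+1 - d = (z N'.+1 - y N'.+2 N'.+1) + (y N'.+2 N'.+1 - d).
      by rewrite addrA subrK.
    exact: h2.
  have := Vj _ (h2 _ _ _ f3 Vd).
  have -> : z N'.+1 - d + (d - x) = z N'.+1 - x by rewrite addrA subrK.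
  by rewrite /= addrC subrK.
have [A [B' [nA nB AB]]] : exists A B', [/\ nbhs x0 A, nbhs (0 : X) B' & A `&` B' = set0].
  have : ~ cluster (nbhs x0) 0 by move=> c; apply: x00; exact: hX.
  move/existsNP => [A /existsNP [B' /not_implyP [nA /not_implyP [nB AB]]]].
  exists A, B'; split => //; apply/seteqP; split => // p [Ap Bp]; apply: AB; by exists p.
have [N AN] := zd x0 A nA.
exists w; split; first split.
- split.
  + move=> n; apply: (leq_trans _ (wle 0%N n (leq0n _))).
    exact: leq_ltn_trans (leq0n _) (Fc 0%N).
  + exact: wI.
- exists (z N); split; last exact: Lz.
  move=> zN0; suff : (A `&` B') 0 by rewrite AB.
  by split; [rewrite -zN0 | exact: nbhs_singleton].
- move=> O [x Ox] oO; have [N' ON] := zd x O (open_nbhs_nbhs (conj oO Ox)).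
  by exists (z N'); split.
Qed.

Theorem theorem3p2 (R : realType) (X : tvsType R) (T : {linear X -> X}) :
  frechet X -> separable_space X -> (exists x : X, x <> 0) ->
  continuous T -> recurrent T ->
  (quasi_rigid T <-> forall m : nat, recurrent (Tsum T m)).
Proof.
move=> fX sX nz cT _; split; first exact: dir12.
exact: dir21 fX sX nz cT.
Qed.
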